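(* For every positive integer $n$, let $S_n$ be the tournament on vertex set $\{v_1,\ldots,v_n\}$ obtained as follows: start from the acyclic tournament in which, for all $1\le j<i\le n$, the edge between $v_i$ and $v_j$ is directed from $v_i$ to $v_j$ (so the out-neighbours of $v_i$ are $v_1,\ldots,v_{i-1}$), and then reverse the edges of the Hamiltonian path $v_n,v_{n-1},\ldots,v_1$ (i.e. for each $1\le i\le n-1$ the edge $v_{i+1}\to v_i$ is replaced by $v_i\to v_{i+1}$). Then $$P(S_n;x)=\sum_{i=1}^n\binom{i}{n-i}x(x-1)^{i-1}.$$
   Context: For a positive integer $k$, a proper $k$-coloring of a digraph $D$ is a map $c:V(D)\to\{1,\ldots,k\}$ such that each color class induces a subdigraph with no directed cycle. The number of proper $k$-colorings of $D$ is a polynomial in $k$, denoted $P(D;k)$ (the dichromatic polynomial). $\binom{i}{m}=0$ when $m>i$. *)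

(* Defs.v *)
From mathcomp Require Import all_boot.
Set Implicit Arguments. Unset Strict Implicit. Unset Printing Implicit Defensive.

(* A digraph on a finite vertex type T is an edge relation e : rel T
   (e x y means the arc x -> y). *)

Definition induced_rel (T : finType) (e : rel T) (A : {set T}) : rel T :=
  [rel x y | [&& e x y, x \in A & y \in A]].

Definition has_dicycle_in (T : finType) (e : rel T) (A : {set T}) : bool :=
  [exists x, exists y,
     [&& x \in A, y \in A, e x y & connect (induced_rel e A) y x]].

Definition proper_coloring (T : finType) (e : rel T) (k : nat)
  (c : {ffun T -> 'I_k}) : bool :=
  [forall j : 'I_k, ~~ has_dicycle_in e [set v | c v == j]].

(* Dichromatic polynomial evaluated at k: number of proper k-colorings. *)
Definition dichromatic (T : finType) (e : rel T) (k : nat) : nat :=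
  #|[set c : {ffun T -> 'I_k} | proper_coloring e c]|.

(* The tournament S_n on 'I_n (vertex v_{i+1} is the ordinal i).
   Base: a -> b iff b < a (acyclic tournament); then the arcs of the
   Hamiltonian path v_n, ..., v_1 are reversed: a -> a+1 instead of
   a+1 -> a. *)
Definition S_tour (n : nat) : rel 'I_n :=
  [rel a b | (val b == (val a).+1) || ((val b < val a) && (val a != (val b).+1))].

(* Main.v *)
Require Import Defs.
From mathcomp Require Import all_boot.
From mathcomp Require Import zify.
Set Implicit Arguments. Unset Strict Implicit. Unset Printing Implicit Defensive.

Fixpoint good3 (T : eqType) (s : seq T) : bool :=
  match s with
  | x :: ((y :: z :: _) as s') => ~~ ((x == y) && (y == z)) && good3 s'
  | _ => true
  end.

Section Count.
Variable q : nat.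

Fixpoint all_seqs (n : nat) : seq (seq 'I_q.+1) :=
  if n is n'.+1 then [seq x :: s | x <- enum 'I_q.+1, s <- all_seqs n'] else [:: [::]].

Lemma mem_all_seqs n s : (s \in all_seqs n) = (size s == n).
Proof.
elim: n s => [|n IH] [|x s] //=.
  apply/allpairsP => -[[a b] [_ _ /=]] //.
apply/allpairsP/idP => [[[a b] [_ /= Hb [_ ->]]]|Hs].
  by rewrite eqSS -IH.
by exists (x, s); rewrite /= mem_enum IH -eqSS.
Qed.

Lemma uniq_all_seqs n : uniq (all_seqs n).
Proof.
elim: n => [|n IH] //=.
apply: allpairs_uniq => //; first exact: enum_uniq.
by move=> [a b] [c d] _ _ /= [-> ->].
Qed.

Definition T m := \sum_(j < m.+1) 'C(j.+1, m - j) * q ^ j.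

Lemma T0 : T 0 = 1.
Proof. by rewrite /T big_ord1. Qed.

Lemma T1 : T 1 = q.+1.
Proof. rewrite /T !big_ord_recr big_ord0 /= subn0 subnn bin1 bin0 expn0 expn1; lia. Qed.

Lemma TSS m : T m.+2 = q * (T m + T m.+1).
Proof.
rewrite /T big_ord_recl /= bin_small // mul0n add0n.
rewrite big_ord_recr /= subnn bin0 mul1n.
rewrite mulnDr [in X in _ = _ + X]big_ord_recr /= subnn bin0 mul1n.
rewrite /bump !leq0n !add1n.
rewrite mulnDr !big_distrr addnA -big_split -expnS; congr (_ + _).
apply: eq_bigr => j _.
rewrite !subSS.
have Hj : j <= m by rewrite -ltnS.
rewrite subSn // binS mulnDl expnS leq0n add1n /=; nia.
Qed.

Definition NN2 n (x y : 'I_q.+1) := \sum_(s <- all_seqs n) (good3 [:: x, y & s] : nat).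

Lemma NN2S n x y : NN2 n.+1 x y = \sum_(z < q.+1) (~~ ((x == y) && (y == z))) * NN2 n y z.
Proof.
rewrite /NN2 /= big_allpairs_dep /= big_enum /=; apply: eq_bigr => z _.
by rewrite big_distrr; apply: eq_bigr => s _ /=; rewrite mulnb.
Qed.

Lemma sum_if (y : 'I_q.+1) a b : \sum_(z < q.+1) (if y == z then a else b) = a + q * b.
Proof.
rewrite (bigD1 y) //= eqxx; congr (_ + _).
rewrite (eq_bigr (fun _ => b)); last by move=> z; rewrite eq_sym => /negbTE ->.
by rewrite sum_nat_const cardC1 card_ord.
Qed.

Definition Sv n := if n is n'.+1 then q * T n' else 1.

Lemma TS n : T n.+1 = Sv n + q * T n.
Proof. case: n => [|n] /=; first by rewrite T1 T0 muln1 add1n. by rewrite TSS mulnDr. Qed.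

Lemma NN2_val n x y : NN2 n x y = if x == y then Sv n else T n.
Proof.
elim: n x y => [|n IH] x y.
  by rewrite /NN2 /= big_seq1 T0; case: (x == y).
rewrite NN2S.
have [Exy|Hxy] := eqVneq x y.
  rewrite /=.
  rewrite (eq_bigr (fun z : 'I_q.+1 => if y == z then 0 else T n)); last first.
    by move=> z _; rewrite IH; case: (y == z); rewrite ?mul1n.
  by rewrite sum_if.
rewrite (eq_bigr (fun z : 'I_q.+1 => if y == z then Sv n else T n)); last first.
  by move=> z _; rewrite IH /= mul1n.
by rewrite sum_if TS.
Qed.

Definition Acount n := \sum_(s <- all_seqs n) (good3 s : nat).

Lemma Acount_val m : Acount m.+1 = q.+1 * T m.
Proof.
case: m => [|m].
  rewrite /Acount /= big_flatten /= big_map big_enum /= T0 muln1.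
  rewrite (eq_bigr (fun _ => 1)); last by move=> i _; rewrite big_seq1.
  by rewrite sum_nat_const card_ord muln1.
rewrite /Acount /= big_allpairs_dep /= big_enum /=.
rewrite (eq_bigr (fun _ => T m.+1)); last first.
  move=> x _; rewrite big_allpairs_dep /= big_enum /=.
  rewrite (eq_bigr (fun y : 'I_q.+1 => if x == y then Sv m else T m)); last first.
    by move=> y _; rewrite -NN2_val.
  by rewrite sum_if TS.
by rewrite sum_nat_const card_ord.
Qed.

Lemma final_sum m :
  \sum_(1 <= i < m.+2) 'C(i, m.+1 - i) * (q.+1 * q ^ (i - 1)) = q.+1 * T m.
Proof.
rewrite -(add0n 1) big_addn subn1 /= big_mkord /T big_distrr /=.
apply: eq_bigr => j _.
rewrite addn1 subn1 /= subSS; lia.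
Qed.

End Count.

Section Graph.
Variables (n' q : nat).
Local Notation N := n'.+1.
Variable c : {ffun 'I_N -> 'I_q.+1}.

Definition tf := forall i, i.+2 < N ->
  ~~ ((c (inord i) == c (inord i.+1)) && (c (inord i.+1) == c (inord i.+2))).

Lemma proper_tf1 : proper_coloring (@S_tour N) c -> tf.
Proof.
move=> Hp i Hi; apply/negP => /andP [/eqP E1 /eqP E2].
move/forallP: Hp => /(_ (c (inord i))) /negP; apply.
apply/existsP; exists (inord i); apply/existsP; exists (inord i.+1).
have H0 : i < N by lia.
have H1 : i.+1 < N by lia.
rewrite !in_set eqxx -E1 eqxx /=.
apply/andP; split; first by rewrite /S_tour /= !inordK // eqxx.
apply: (connect_trans (_ : connect _ _ (inord i.+2))); apply: connect1;
  rewrite /induced_rel /S_tour /= !in_set -?E2 -?E1 !eqxx !inordK //= ?eqxx //.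
lia.
Qed.

Lemma proper_tf2 : tf -> proper_coloring (@S_tour N) c.
Proof.
move=> H; apply/forallP => j; apply/negP.
case/existsP => x /existsP [y /and4P [Hx Hy Exy Hc]].
pose inA m := (m < N) && (c (inord m) == j).
have memA v : (v \in [set v | c v == j]) = inA (nat_of_ord v).
  by rewrite in_set /inA ltn_ord inord_val.
have tfA m : inA m -> inA m.+1 -> inA m.+2 -> False.
  move=> /andP [h0 /eqP e0] /andP [h1 /eqP e1] /andP [h2 /eqP e2].
  by move: (H m h2); rewrite e0 e1 e2 eqxx.
pose pa m := if m is m'.+1 then inA m' else false.
pose f m := m + inA m.+1 - pa m.
have key u v : induced_rel (@S_tour N) [set v | c v == j] u v -> f (nat_of_ord v) < f (nat_of_ord u).
  rewrite /induced_rel /S_tour /= !memA.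
  move: (nat_of_ord u) (nat_of_ord v) => a b /and3P [Eab Ha Hb].
  case/orP: Eab => [/eqP Eb | /andP [Hlt Hne]].
    subst b.
    have F2 : inA a.+2 = false by apply/negP => /(tfA _ Ha Hb).
    rewrite /f /pa /= Ha F2.
    case: a Ha Hb F2 => [|a'] Ha Hb F2 /=; first by rewrite Hb.
    have F0 : inA a' = false by apply/negP => /tfA /(_ Ha Hb).
    rewrite F0 /=; lia.
  have [d Ed] : exists d, a = d + b.+2.
    exists (a - b.+2); rewrite subnK //; lia.
  subst a.
  case: d Ha Hne Hlt => [|d] Ha Hne Hlt.
    rewrite add0n in Ha *.
    have F1 : inA b.+1 = false by apply/negP => /(tfA _ Hb) /(_ Ha).
    rewrite /f /pa /= F1.
    case: b Hb Ha F1 {Hne Hlt} => [|b] Hb Ha F1 /=.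
      case: (inA 3); lia.
    case: (inA b); case: (inA (b.+4)); lia.
  rewrite /f /pa addSn /=.
  clear Ha Hb Hne Hlt.
  case: b => [|b] /=.
    by move: (inA 1) (inA (d + 2).+2) (inA (d + 2)) => [] [] []; lia.
  by move: (inA b.+2) (inA b) (inA (d + b.+3).+2) (inA (d + b.+3)) => [] [] [] []; lia.
have mono p u : path (induced_rel (@S_tour N) [set v | c v == j]) u p ->
    f (nat_of_ord (last u p)) <= f (nat_of_ord u).
  elim: p u => [|w p IH] u //= /andP [Huw Hp].
  apply: leq_trans (IH _ Hp) _; exact: ltnW (key _ _ Huw).
case/connectP: Hc => p Hp Ex.
have := mono _ _ Hp; rewrite -Ex => Hle.
have := key _ _ (_ : induced_rel _ _ x y).
move=> /(_ _) Hlt.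
have : f (nat_of_ord y) < f (nat_of_ord x) by apply: Hlt; rewrite /induced_rel /= Exy Hx Hy.
by rewrite ltnNge Hle.
Qed.

End Graph.
Lemma good3P (T0 : eqType) (x0 : T0) (s : seq T0) :
  good3 s <-> (forall i, i.+2 < size s ->
    ~~ ((nth x0 s i == nth x0 s i.+1) && (nth x0 s i.+1 == nth x0 s i.+2))).
Proof.
elim: s => [|x s IH] //=.
case: s IH => [|y [|z s]] IH //=.
split.
  move=> /andP [H1 /IH H2] [|i] Hi //=; exact: (H2 i Hi).
move=> H; apply/andP; split; first exact: (H 0).
by apply/IH => i Hi; apply: (H i.+1).
Qed.

Section Bridge.
Variables (n' q : nat).
Local Notation N := n'.+1.

Definition gseq (c : {ffun 'I_N -> 'I_q.+1}) := [seq c i | i <- enum 'I_N].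

Lemma nth_gseq c i : i < N -> nth ord0 (gseq c) i = c (inord i).
Proof.
move=> Hi; rewrite /gseq (nth_map ord0) ?size_enum_ord //; congr (c _).
by apply: val_inj; rewrite /= nth_enum_ord // inordK.
Qed.

Lemma proper_good c : proper_coloring (@S_tour N) c = good3 (gseq c).
Proof.
apply/idP/idP.
  move/proper_tf1 => H; apply/(good3P ord0) => i.
  rewrite size_map size_enum_ord => Hi.
  by rewrite !nth_gseq //; [apply: H | lia | lia].
move=> /(good3P ord0) H; apply: proper_tf2 => i Hi.
have := H i; rewrite size_map size_enum_ord !nth_gseq //; [| lia | lia].
by apply.
Qed.

Lemma perm_gseq : perm_eq [seq gseq c | c <- index_enum {ffun 'I_N -> 'I_q.+1}] (all_seqs q N).
Proof.
apply: uniq_perm; [| exact: uniq_all_seqs |].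
  rewrite map_inj_uniq ?index_enum_uniq // => c c' E.
  apply/ffunP => i; move/eq_in_map: E; apply; exact: mem_enum.
move=> s; rewrite mem_all_seqs; apply/mapP/idP.
  by move=> [c _ ->]; rewrite size_map size_enum_ord.
move/eqP => Hs; exists [ffun i : 'I_N => nth ord0 s i]; first by rewrite mem_index_enum.
rewrite /gseq -[in LHS](mkseq_nth ord0 s) Hs /mkseq -val_enum_ord -map_comp.
by apply: eq_map => i /=; rewrite ffunE.
Qed.

Lemma dich_count : dichromatic (@S_tour N) q.+1 = Acount q N.
Proof.
rewrite /dichromatic -sum1_card big_mkcond /=.
rewrite (eq_bigr (fun c => (good3 (gseq c) : nat))); last first.
  by move=> c _; rewrite in_set proper_good; case: (good3 _).
by rewrite -(big_map gseq xpredT (fun s => (good3 s : nat))) (perm_big _ perm_gseq).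
Qed.

End Bridge.

Theorem mainTheorem9 (n : nat) (hn : 0 < n) (k : nat) (hk : 0 < k) :
  dichromatic (@S_tour n) k =
  \sum_(1 <= i < n.+1) 'C(i, n - i) * (k * (k - 1) ^ (i - 1)).
Proof.
case: n hn => // m _; case: k hk => // q _.
rewrite dich_count Acount_val subn1 /= -final_sum.
by [].
Qed.
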